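(* Let $m\ge2$ and let $C=\mathrm{diag}(c_1,\dots,c_m)$ be a real diagonal matrix. Let $\mathcal S_m$, $\mathcal D_m$, $\mu$, $\dot P_m$ and the quantum SLD Fisher metric $\langle\cdot,\cdot\rangle$ be as in the context. Let $\Lambda(w)=-\frac12 w^TCw$ on $\mathcal S_m$, with gradient (with respect to the metric $u^Tu'$ on $T_w\mathcal S_m=\{u: w^Tu=0\}$) $\mathrm{grad}\,\Lambda(w)=-Cw+(w^TCw)w$, and let $\mu_\ast\mathrm{grad}\,\Lambda$ be the vector field on $\mathcal D_m$ defined by $\mu_\ast\mathrm{grad}\,\Lambda(\mu(w))=\mu_{\ast,w}(\mathrm{grad}\,\Lambda(w))$ for $w\in\mathcal S_m$. Let $L$ be a smooth function on $\dot P_m$ and $\mathrm{grad}\,L$ its gradient with respect to the quantum SLD Fisher metric. If $L(\mu(w))=4\Lambda(w)$ for all $w\in\mathcal S_m$, then for every $\Theta\in\mathcal D_m$ and every $Z\in T_\Theta\mathcal D_m$, $$\langle \mathrm{grad}\,L(\Theta),Z\rangle_\Theta=\langle\mu_\ast\mathrm{grad}\,\Lambda(\Theta),Z\rangle_\Theta.$$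
   Context: $\mathcal S_m=\{w\in\mathbf R^m:\|w\|=1,\ w_k\ne0\ \forall k\}$; $\mathcal D_m=\{\mathrm{diag}(\theta_1,\dots,\theta_m):\sum\theta_k=1,\theta_k>0\}$ with $T_\Theta\mathcal D_m$ the traceless real diagonal matrices; $\mu(w)=\mathrm{diag}(w_1^2,\dots,w_m^2)$ with differential $\mu_{\ast,w}(u)=2\,\mathrm{diag}(w_1u_1,\dots,w_mu_m)$. (The vector field $\mu_\ast\mathrm{grad}\,\Lambda$ is well defined since $\mathrm{grad}\,\Lambda$ is equivariant under sign changes of coordinates and $\mu$ is invariant under them.) $\dot P_m$ is the set of $m\times m$ complex Hermitian positive definite trace-one matrices, $T_\rho\dot P_m$ the Hermitian traceless matrices. The SLD $\mathcal L_\rho(\Xi)$ is the Hermitian solution of $\frac12(\rho\mathcal L_\rho(\Xi)+\mathcal L_\rho(\Xi)\rho)=\Xi$, and the quantum SLD Fisher metric is $\langle\Xi,\Xi'\rangle_\rho=\frac12\mathrm{tr}[\rho(\mathcal L_\rho(\Xi)\mathcal L_\rho(\Xi')+\mathcal L_\rho(\Xi')\mathcal L_\rho(\Xi))]$. The gradient $\mathrm{grad}\,L(\rho)\in T_\rho\dot P_m$ is defined by $\langle\mathrm{grad}\,L(\rho),\Xi\rangle_\rho=\frac{d}{d\tau}\big|_{\tau=0}L(r(\tau))$ for every smooth curve $r$ in $\dot P_m$ with $r(0)=\rho$, $r'(0)=\Xi$. *)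

(* Defs.v *)
From mathcomp Require Import all_boot all_order all_algebra.
From mathcomp Require Import all_classical all_reals all_analysis.
From mathcomp Require Export complex.
Import GRing.Theory Num.Theory ComplexField.
Local Open Scope ring_scope.
Local Open Scope classical_set_scope.

Set Implicit Arguments. Unset Strict Implicit. Unset Printing Implicit Defensive.

Section QSLD.
Variables (R : realType) (m : nat).

Definition reC (z : R[i]) : R := complex.Re z.
Definition imC (z : R[i]) : R := complex.Im z.

Definition adj (A : 'M[R[i]]_m) : 'M[R[i]]_m := (map_mx conjc A)^T.

Definition hermitian (A : 'M[R[i]]_m) : Prop := adj A = A.

Definition posdef (A : 'M[R[i]]_m) : Prop :=
  forall v : 'cV[R[i]]_m, v != 0 ->
    0 < ((map_mx conjc v)^T *m A *m v) ord0 ord0.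

Definition Pdot : set 'M[R[i]]_m :=
  [set A | hermitian A /\ posdef A /\ \tr A = 1].

Definition TPdot : set 'M[R[i]]_m := [set A | hermitian A /\ \tr A = 0].

Definition is_sld (rho Xi X : 'M[R[i]]_m) : Prop :=
  hermitian X /\ (2%:R : R[i])^-1 *: (rho *m X + X *m rho) = Xi.

Definition sld (rho Xi : 'M[R[i]]_m) : 'M[R[i]]_m :=
  xget 0 [set X | is_sld rho Xi X].

Definition qmetric (rho Xi Xi' : 'M[R[i]]_m) : R[i] :=
  (2%:R)^-1 * \tr (rho *m (sld rho Xi *m sld rho Xi' + sld rho Xi' *m sld rho Xi)).

Definition smooth_fun (f : R -> R) : Prop :=
  forall (n : nat) (x : R), derivable (derive1n n f) x 1.

Definition smooth_curve (r : R -> 'M[R[i]]_m) : Prop :=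
  forall i j, smooth_fun (fun t => reC (r t i j)) /\
              smooth_fun (fun t => imC (r t i j)).

Definition velocity0 (r : R -> 'M[R[i]]_m) (Xi : 'M[R[i]]_m) : Prop :=
  forall i j, is_derive (0:R) (1:R) (fun t => reC (r t i j)) (reC (Xi i j)) /\
              is_derive (0:R) (1:R) (fun t => imC (r t i j)) (imC (Xi i j)).

Definition curve_in_Pdot (r : R -> 'M[R[i]]_m) : Prop :=
  exists2 eps : R, 0 < eps & forall t : R, `|t| < eps -> Pdot (r t).

Definition is_qgradient (L : 'M[R[i]]_m -> R) (gradL : 'M[R[i]]_m -> 'M[R[i]]_m)
  : Prop :=
  forall rho, Pdot rho ->
    TPdot (gradL rho) /\
    forall (r : R -> 'M[R[i]]_m) (Xi : 'M[R[i]]_m),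
      smooth_curve r -> curve_in_Pdot r -> r 0 = rho -> velocity0 r Xi ->
      exists d : R, is_derive (0:R) (1:R) (L \o r) d /\
                    qmetric rho (gradL rho) Xi = (d%:C)%C.

Definition Sm : set 'cV[R]_m :=
  [set w | \sum_k (w k ord0) ^+ 2 = 1 /\ forall k, w k ord0 != 0].

Definition cdiag (v : 'rV[R]_m) : 'M[R[i]]_m := diag_mx (map_mx (fun x => (x%:C)%C) v).

Definition Dm : set 'M[R[i]]_m :=
  [set T | exists theta : 'rV[R]_m,
     (forall k, 0 < theta ord0 k) /\ \sum_k theta ord0 k = 1 /\ T = cdiag theta].

Definition TDm : set 'M[R[i]]_m :=
  [set Z | exists z : 'rV[R]_m, \sum_k z ord0 k = 0 /\ Z = cdiag z].

Definition mu (w : 'cV[R]_m) : 'M[R[i]]_m := cdiag (\row_k (w k ord0 ^+ 2)).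

Definition mu_diff (w u : 'cV[R]_m) : 'M[R[i]]_m :=
  cdiag (\row_k (2%:R * (w k ord0 * u k ord0))).

Definition Lambda (c : 'rV[R]_m) (w : 'cV[R]_m) : R :=
  - (2%:R)^-1 * (w^T *m diag_mx c *m w) ord0 ord0.

Definition gradLambda (c : 'rV[R]_m) (w : 'cV[R]_m) : 'cV[R]_m :=
  - (diag_mx c *m w) + (w^T *m diag_mx c *m w) ord0 ord0 *: w.

(* the vector field mu_* grad Lambda on D_m : its value at Theta = mu(w) is
   mu_{*,w}(grad Lambda(w)); we use the preimage w_k = sqrt(theta_k) in S_m *)
Definition muGradLambda (c : 'rV[R]_m) (T : 'M[R[i]]_m) : 'M[R[i]]_m :=
  let w := \col_k Num.sqrt (reC (T k k)) in mu_diff w (gradLambda c w).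

End QSLD.

(* Main.v *)
Require Import Defs.
From mathcomp Require Import all_boot all_order all_algebra.
From mathcomp Require Import all_classical all_reals all_analysis.
From mathcomp Require Import complex ring lra.
Import Order.TTheory GRing.Theory Num.Theory ComplexField.
Import numFieldNormedType.Exports.
Local Open Scope ring_scope.

Section H.
Variables (R : realType) (m : nat).
Implicit Types (v z th : 'rV[R]_m).

Lemma cdiagE v i j : cdiag v i j = ((v 0 i)%:C)%C *+ (i == j).
Proof. by rewrite /cdiag mxE mxE. Qed.

Lemma cdiag_herm v : Defs.hermitian (cdiag v).
Proof.
apply/matrixP => i j; rewrite /adj !mxE eq_sym.
by case: eqP => [->|_]; rewrite ?conjc_real ?conjc0.
Qed.

Lemma herm_entry (A : 'M[R[i]]_m) : Defs.hermitian A -> forall i j, A i j = conjc (A j i).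
Proof. by move=> hA i j; rewrite -{1}hA /adj !mxE. Qed.

Lemma conjcM (x y : R[i]) : conjc (x * y) = conjc x * conjc y.
Proof. exact: rmorphM. Qed.

Lemma pos2C (a b : R) : 0 < a -> 0 < b -> ((a + b)%:C)%C != 0 :> R[i].
Proof.
move=> ha hb; rewrite -(rmorph0 (real_complex R)).
have : (0:R) < a + b by rewrite addr_gt0.
by rewrite -(ltcR (R:=R)) => /lt0r_neq0; rewrite rmorph0.
Qed.

Lemma sld_entry th (hth : forall k, 0 < th 0 k) (A : 'M[R[i]]_m) :
  Defs.hermitian A -> forall i j,
  sld (cdiag th) A i j * ((th 0 i + th 0 j)%:C)%C = 2 * A i j.
Proof.
move=> hA.
set X0 := \matrix_(i, j) (2 * A i j / ((th 0 i + th 0 j)%:C)%C).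
have hX0 : is_sld (cdiag th) A X0.
  split.
    apply/matrixP => i j; rewrite /adj !mxE (herm_entry _ hA i j) addrC.
    by rewrite !conjcM conjc_inv conjc_real conjc_nat.
  apply/matrixP => i j; rewrite /cdiag mul_diag_mx mul_mx_diag !mxE.
  have h := pos2C _ _ (hth i) (hth j).
  move: h; rewrite rmorphD => h; field.
  exact: h.
have := xgetPex 0 (ex_intro _ X0 hX0).
rewrite -/(sld _ _) => -[_]; set X := sld _ _ => /matrixP hX i j.
move: (hX i j); rewrite /cdiag mul_diag_mx mul_mx_diag !mxE => <-.
rewrite rmorphD; field; done.
Qed.

Lemma sld_cdiag th (hth : forall k, 0 < th 0 k) z :
  sld (cdiag th) (cdiag z) = diag_mx (\row_k ((z 0 k / th 0 k)%:C)%C).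
Proof.
apply/matrixP => i j.
case: (eqVneq i j) => [<-|ne].
  have := sld_entry _ hth _ (cdiag_herm z) i i.
  rewrite !mxE eqxx /= => e.
  have h := pos2C _ _ (hth i) (hth i).
  apply: (mulIf h); rewrite e rmorphD fmorph_div /=.
  have hi : ((th 0 i)%:C)%C != 0 :> R[i].
    by rewrite -(rmorph0 (real_complex R)) (inj_eq (@complexI _)) lt0r_neq0.
  field; exact: hi.
have := sld_entry _ hth _ (cdiag_herm z) i j.
rewrite !mxE (negbTE ne) /=.
have h := pos2C _ _ (hth i) (hth j).
by rewrite mulr0 => /eqP; rewrite mulf_eq0 (negbTE h) orbF => /eqP.
Qed.

Lemma qmetric_diag th (hth : forall k, 0 < th 0 k) (A : 'M[R[i]]_m)
  (hA : Defs.hermitian A) z :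
  qmetric (cdiag th) A (cdiag z) = \sum_k A k k * ((z 0 k / th 0 k)%:C)%C.
Proof.
rewrite /qmetric sld_cdiag // {2}/cdiag mul_diag_mx mul_mx_diag mul_diag_mx.
rewrite /mxtrace mulr_sumr; apply: eq_bigr => k _; rewrite !mxE.
have := sld_entry _ hth _ hA k k.
set S := sld _ _ k k => e.
have hk : ((th 0 k)%:C)%C != 0 :> R[i].
  by rewrite -(rmorph0 (real_complex R)) (inj_eq (@complexI _)) lt0r_neq0.
have -> : A k k = S * ((th 0 k)%:C)%C.
  apply: (mulfI (_ : (2:R[i]) != 0)); first by rewrite -[2]/(2%:R) pnatr_eq0.
  by rewrite -e rmorphD; ring.
rewrite fmorph_div /=; field; exact: hk.
Qed.

Lemma rhs_val th (hth : forall k, 0 < th 0 k) z (hz : \sum_k z 0 k = 0) c :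
  qmetric (cdiag th) (muGradLambda c (cdiag th)) (cdiag z) =
  ((-2 * \sum_k c 0 k * z 0 k)%:C)%C.
Proof.
rewrite /muGradLambda /mu_diff qmetric_diag //; last exact: cdiag_herm.
set w := \col_k _.
set s := (w^T *m diag_mx c *m w) 0 0.
have wE k : w k 0 = Num.sqrt (th 0 k).
  by rewrite /w !mxE eqxx mulr1n.
have -> : \sum_k cdiag (\row_k (2%:R * (w k 0 * gradLambda c w k 0))) k k *
    ((z 0 k / th 0 k)%:C)%C =
    \sum_k (((2 * s) * z 0 k - 2 * (c 0 k * z 0 k))%:C)%C.
  apply: eq_bigr => k _.
  have gk : gradLambda c w k 0 = - (c 0 k * w k 0) + s * w k 0.
    rewrite /gradLambda mxE [in LHS]mxE mul_diag_mx mxE -/s.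
    by rewrite [(_ *: w) k 0]mxE.
  rewrite cdiagE eqxx mulr1n mxE gk -rmorphM; congr (_%:C)%C.
  have hk : th 0 k != 0 by rewrite lt0r_neq0.
  have ww : w k 0 * w k 0 = th 0 k by rewrite wE -expr2 sqr_sqrtr // ltW.
  have -> : 2 * (w k 0 * (- (c 0 k * w k 0) + s * w k 0)) =
     2 * (s - c 0 k) * (w k 0 * w k 0) by ring.
  rewrite ww; field; exact: hk.
rewrite -rmorph_sum; congr (_%:C)%C.
by rewrite sumrB -!mulr_sumr hz mulr0 sub0r mulNr.
Qed.
End H.

Section H2.
Variables (R : realType).

Lemma aff_derive (a b x : R) : is_derive x 1 (fun t : R => a + b * t) b.
Proof.
have h := is_deriveD (is_derive_cst a x 1) (is_deriveZ b (is_derive_id x (1:R))).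
have e : (cst a + b \*: id) = (fun t : R => a + b * t) by apply: funext => t.
rewrite -e; apply: (is_derive_eq h).
by rewrite add0r; exact: mulr1.
Qed.

Lemma aff_smooth (a b : R) : smooth_fun (fun t : R => a + b * t).
Proof.
have d1 : forall a b : R, derive1 (fun t : R => a + b * t) = (fun t => b + 0 * t).
  move=> a' b'; apply: funext => t; rewrite derive1E (@derive_val _ _ _ _ _ _ _ (aff_derive a' b' t)).
  by rewrite mul0r addr0.
move=> n x.
have : exists a' b', derive1n n (fun t : R => a + b * t) = (fun t => a' + b' * t).
  elim: n => [|n [a' [b' IH]]]; first by exists a, b; rewrite derive1n0.
  by exists b', 0; rewrite derive1nS IH d1.
move=> [a' [b' ->]].
exact: (@ex_derive _ _ _ _ _ _ _ (aff_derive a' b' x)).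
Qed.
End H2.
Section H3.
Variables (R : realType) (m : nat).
Lemma Pdot_cdiag (v : 'rV[R]_m) (hv : forall k, 0 < v 0 k) (hs : \sum_k v 0 k = 1) :
  Pdot (cdiag v).
Proof.
split; [exact: cdiag_herm|split].
  move=> x hx.
  have [k xk] : exists k, x k 0 != 0.
    apply/existsP; apply: contraR hx => /existsPn H.
    apply/eqP/matrixP => i j; rewrite ord1 mxE; apply/eqP.
    by have := H i; rewrite negbK.
  rewrite /cdiag mul_mx_diag mxE.
  have tm j : ((\matrix_(i, j) ((map_mx conjc x)^T i j *
      map_mx (real_complex R) v 0 j)) 0 j * x j 0) = ((v 0 j)%:C)%C * (x j 0 * (x j 0)^*)%C.
    by rewrite !mxE; ring.
  rewrite (eq_bigr _ (fun j _ => tm j)) (bigD1 k) //=.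
  apply: ltr_pwDl.
    by apply: mulr_gt0; [rewrite ltcR | rewrite mul_conjC_gt0].
  apply: sumr_ge0 => j _; apply: mulr_ge0; [rewrite lecR; exact: ltW | exact: mul_conjC_ge0].
rewrite /cdiag mxtrace_diag.
have -> : \sum_j map_mx (real_complex R) v 0 j = ((\sum_j v 0 j)%:C)%C.
  by rewrite rmorph_sum; apply: eq_bigr => j _; rewrite mxE.
by rewrite hs.
Qed.
End H3.

Theorem lemma2 (R : realType) (m : nat) (hm : (2 <= m)%N) (c : 'rV[R]_m)
  (L : 'M[R[i]]_m -> R) (gradL : 'M[R[i]]_m -> 'M[R[i]]_m)
  (hgrad : is_qgradient L gradL)
  (hL : forall w : 'cV[R]_m, Sm w -> L (mu w) = 4%:R * Lambda c w) :
  forall Theta Z : 'M[R[i]]_m, Dm Theta -> TDm Z ->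
    qmetric Theta (gradL Theta) Z = qmetric Theta (muGradLambda c Theta) Z.
Proof.
move=> Theta Z [th [hth [hs ->]]] [z [hz ->]].
rewrite rhs_val //.
have PT := Pdot_cdiag _ _ _ hth hs.
have [_ H] := hgrad _ PT.
set dl := \big[Num.min/1]_k th 0 k.
have dpos : 0 < dl by apply: lt_bigmin.
have dle k : dl <= th 0 k by apply: bigmin_le.
set M := 1 + \sum_k `|z 0 k|.
have zle k : `|z 0 k| <= M.
  rewrite /M (bigD1 k) //=.
  have : 0 <= \sum_(j | j != k) `|z 0 j| by apply: sumr_ge0.
  lra.
have Mpos : 0 < M.
  have : 0 <= \sum_k `|z 0 k| by apply: sumr_ge0.
  rewrite /M; lra.
set eps := dl / M.
have epos : 0 < eps by apply: divr_gt0.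
have pos t : `|t| < eps -> forall k, 0 < th 0 k + t * z 0 k.
  move=> ht k.
  have h1 : `|t| * M < dl by rewrite -ltr_pdivlMr.
  have h2 : `|t * z 0 k| <= `|t| * M by rewrite normrM ler_wpM2l.
  have h3 : - `|t * z 0 k| <= t * z 0 k.
    by rewrite -normrN; have := ler_norm (- (t * z 0 k)); lra.
  have := dle k; lra.
set r := fun t : R => cdiag (th + t *: z).
have rE t i j : reC (r t i j) = th 0 i *+ (i == j) + (z 0 i *+ (i == j)) * t.
  rewrite /r cdiagE !mxE; case: (i == j) => /=.
    by rewrite !mulr1n mulrC.
  by rewrite !mulr0n mul0r addr0.
have iE t i j : imC (r t i j) = 0 + 0 * t.
  rewrite /r cdiagE !mxE mul0r addr0; case: (i == j) => //=.
have smooth : smooth_curve r.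
  move=> i j; split.
    have -> : (fun t => reC (r t i j)) =
      (fun t => th 0 i *+ (i == j) + (z 0 i *+ (i == j)) * t).
      by apply: funext => t; rewrite rE.
    exact: aff_smooth.
  have -> : (fun t => imC (r t i j)) = (fun t => 0 + 0 * t).
    by apply: funext => t; rewrite iE.
  exact: aff_smooth.
have cin : curve_in_Pdot r.
  exists eps => // t ht; apply: Pdot_cdiag.
    by move=> k; rewrite !mxE; exact: pos.
  have -> : \sum_k (th + t *: z) 0 k = \sum_k th 0 k + t * \sum_k z 0 k.
    by rewrite mulr_sumr -big_split; apply: eq_bigr => k _; rewrite !mxE.
  by rewrite hs hz mulr0 addr0.
have r0 : r 0 = cdiag th by rewrite /r scale0r addr0.
have vel : velocity0 r (cdiag z).
  move=> i j; split.
    have -> : (fun t => reC (r t i j)) =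
      (fun t => th 0 i *+ (i == j) + (z 0 i *+ (i == j)) * t).
      by apply: funext => t; rewrite rE.
    apply: (is_derive_eq (aff_derive _ _ _ _)).
    by rewrite cdiagE; case: (i == j).
  have -> : (fun t => imC (r t i j)) = (fun t => 0 + 0 * t).
    by apply: funext => t; rewrite iE.
  apply: (is_derive_eq (aff_derive _ _ _ _)).
  by rewrite cdiagE; case: (i == j).
have [d [hd ->]] := H r (cdiag z) smooth cin r0 vel.
congr (_%:C)%C.
set a := -2 * \sum_k c 0 k * th 0 k.
set b := -2 * \sum_k c 0 k * z 0 k.
have nearE : \forall t \near (0:R), (L \o r) t = a + b * t.
  near=> t.
  have ht : `|t| < eps.
    near: t; exact: (@nbhs0_lt R R^o eps epos).
  rewrite /=.
  set w := \col_k Num.sqrt (th 0 k + t * z 0 k).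
  have wk k : w k 0 ^+ 2 = th 0 k + t * z 0 k.
    by rewrite /w mxE sqr_sqrtr // ltW // pos.
  have rw : r t = mu w.
    rewrite /mu /r; congr cdiag; apply/rowP => k; rewrite !mxE.
    by rewrite sqr_sqrtr // ltW // pos.
  have Sw : Sm w.
    split.
      have -> : \sum_k w k 0 ^+ 2 = \sum_k th 0 k + t * \sum_k z 0 k.
        by rewrite mulr_sumr -big_split; apply: eq_bigr => k _; rewrite wk.
      by rewrite hs hz mulr0 addr0.
    move=> k; rewrite /w mxE lt0r_neq0 // sqrtr_gt0 pos //.
  rewrite rw hL // /Lambda mul_mx_diag mxE.
  have -> : \sum_j (\matrix_(i, j) (w^T i j * c 0 j)) 0 j * w j 0 =
      \sum_k c 0 k * th 0 k + t * \sum_k c 0 k * z 0 k.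
    rewrite mulr_sumr -big_split; apply: eq_bigr => k _; rewrite !mxE.
    have := wk k; rewrite expr2 => e.
    rewrite mulrAC -expr2 sqr_sqrtr ?ltW ?pos // /=; ring.
  rewrite /a /b; set A := \sum_(k < m) _ * th 0 k; set B := \sum_(k < m) c 0 k * z 0 k.
  have h2 : (2:R) != 0 by rewrite pnatr_eq0.
  by field.
have hg := near_eq_is_derive nearE hd.
have e1 := @derive_val _ _ _ _ _ _ _ hg.
by rewrite -e1 (@derive_val _ _ _ _ _ _ _ (aff_derive _ a b 0)).
Unshelve. all: by end_near.
Qed.
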